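(* Let $m,n\ge1$, $\mathcal{H}=\mathbb{R}^{m\times n}$ with $\langle\mathbf{A},\mathbf{B}\rangle_{\mathcal{H}}=\mathbf{A}^\intercal\mathbf{B}$, and let $\mathbf{V}\in\mathbb{R}^{n\times n}$ be a nonzero symmetric matrix such that $\langle\langle\mathbf{X},\mathbf{X}\rangle_{\mathcal{H}},\mathbf{V}/\|\mathbf{V}\|\rangle\ge0$ for all $\mathbf{X}\in\mathcal{H}$. Let $\mathcal{S}=\{\mathbf{X}_1,\dots,\mathbf{X}_N\}$ be a finite set of matrices in $\mathbb{R}^{m\times n}$ and define $$\mathcal{H}_{\max}\circ\mathcal{S}=\Big\{\Big(\big\langle\langle\mathbf{W},\mathbf{X}_1\rangle_{\mathcal{H}},\tfrac{\mathbf{V}}{\|\mathbf{V}\|}\big\rangle,\dots,\big\langle\langle\mathbf{W},\mathbf{X}_N\rangle_{\mathcal{H}},\tfrac{\mathbf{V}}{\|\mathbf{V}\|}\big\rangle\Big):\ \|\mathbf{W}\|_{\max}\le1\Big\}\subseteq\mathbb{R}^N.$$ Then $$R(\mathcal{H}_{\max}\circ\mathcal{S})\le n\max_{1\le i\le N}\|\mathbf{X}_i\|_1\sqrt{\frac{2(m\ln2+\ln n)}{N}}.$$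
   Context: $\langle\cdot,\cdot\rangle$ is the Frobenius inner product and $\|\mathbf{V}\|$ the Frobenius norm. For $\mathbf{X}\in\mathbb{R}^{m\times n}$: $\|\mathbf{X}\|_1=\max_{1\le j\le n}\sum_{i=1}^m|x_{ij}|$ and $\|\mathbf{X}\|_{\max}=\max_{i,j}|x_{ij}|$ (maximum over all entries). For $\mathcal{A}\subseteq\mathbb{R}^N$, the Rademacher complexity is $R(\mathcal{A})=\frac1N\mathbb{E}_{\bm\sigma}\big[\sup_{\mathbf{a}\in\mathcal{A}}\sum_{i=1}^N\sigma_ia_i\big]$, where $\sigma_1,\dots,\sigma_N$ are i.i.d. uniform on $\{\pm1\}$. *)

(* Defs.v *)
From HB Require Import structures.
From mathcomp Require Import all_boot all_order all_algebra.
From mathcomp Require Import all_classical all_reals all_analysis.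
Set Implicit Arguments. Unset Strict Implicit. Unset Printing Implicit Defensive.
Import Order.TTheory GRing.Theory Num.Theory.
Local Open Scope classical_set_scope.
Local Open Scope ring_scope.

Section Defs.
Variable R : realType.

Definition frob_inner (p q : nat) (A B : 'M[R]_(p, q)) : R :=
  \sum_(i < p) \sum_(j < q) A i j * B i j.

Definition frob_norm (p q : nat) (A : 'M[R]_(p, q)) : R :=
  Num.sqrt (frob_inner A A).

Definition mx_norm1 (p q : nat) (X : 'M[R]_(p, q)) : R :=
  \big[Num.max/0]_(j < q) \sum_(i < p) `|X i j|.

Definition mx_normmax (p q : nat) (X : 'M[R]_(p, q)) : R :=
  \big[Num.max/0]_(i < p) \big[Num.max/0]_(j < q) `|X i j|.

Definition inner_H (p q : nat) (A B : 'M[R]_(p, q)) : 'M[R]_q := A^T *m B.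

Definition rsign (b : bool) : R := if b then 1 else -1.

(* Rademacher complexity of A ⊆ R^N: (1/N) E_sigma [sup_{a in A} sum_i sigma_i a_i],
   the expectation over the uniform distribution on {±1}^N written as
   an average over all 2^N sign vectors. *)
Definition rademacher (N : nat) (A : set ('I_N -> R)) : R :=
  N%:R^-1 * ((2 ^ N)%:R^-1 *
    \sum_(s : {ffun 'I_N -> bool})
       sup [set \sum_(i < N) rsign (s i) * a i | a in A]).

Definition Hmax_S (m n N : nat) (V : 'M[R]_n) (Xs : 'I_N -> 'M[R]_(m, n))
  : set ('I_N -> R) :=
  [set (fun i => frob_inner (inner_H W (Xs i)) ((frob_norm V)^-1 *: V))
     | W in [set W : 'M[R]_(m, n) | mx_normmax W <= 1]].

End Defs.

(* Main.v *)
Require Import Defs.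
From HB Require Import structures.
From mathcomp Require Import all_boot all_order all_algebra.
From mathcomp Require Import all_classical all_reals all_analysis.
From mathcomp Require Import ring lra.
Import Order.TTheory GRing.Theory Num.Theory.
Local Open Scope classical_set_scope.
Local Open Scope ring_scope.

Section Helpers.
Variable R : realType.

Lemma key_ineq (a b c K : R) : 0 < c -> 0 <= K -> b <= c * K^+2 ->
  (forall t, 0 < t -> 2 * t * a <= b + c * t^+2) -> a <= c * K.
Proof.
move=> c0 K0 hb ht.
have [Kp|] := ltrP 0 K.
  have := ht K Kp; rewrite expr2 => h.
  have : 2 * K * a <= 2 * K * (c * K) by rewrite expr2 in hb; lra.
  by rewrite ler_pM2l ?mulr_gt0.
move=> Kle; have eK : K = 0 by apply/eqP; rewrite eq_le Kle K0.
subst K; rewrite mulr0; have [a0|ap] := lerP a 0 => //.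
have := ht (a / c) (divr_gt0 ap c0).
rewrite expr0n /= mulr0 in hb.
move=> h; exfalso.
have e1 : c * (a / c) ^+ 2 = a * (a / c) by field; rewrite gt_eqF.
rewrite e1 in h.
have : 0 < a * (a / c) by rewrite mulr_gt0 // divr_gt0.
nra.
Qed.

Definition flip {N} (i : 'I_N) (s : {ffun 'I_N -> bool}) : {ffun 'I_N -> bool} :=
  [ffun j => if j == i then ~~ s j else s j].

Lemma flipK {N} (i : 'I_N) : involutive (flip i).
Proof. by move=> s; apply/ffunP => j; rewrite !ffunE; case: eqP => //= _; rewrite negbK. Qed.

Lemma rsign_sq (b : bool) : rsign R b * rsign R b = 1.
Proof. by case: b; rewrite /rsign ?mulr1 ?mulrNN ?mulr1. Qed.

Lemma sum_sign_cross N (i j : 'I_N) : i != j ->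
  \sum_(s : {ffun 'I_N -> bool}) rsign R (s i) * rsign R (s j) = 0.
Proof.
move=> ij.
set S := (X in X = 0).
have : S = - S.
  rewrite {1}/S (reindex_inj (can_inj (flipK i))) /S -sumrN.
  apply: eq_bigr => s _; rewrite !ffunE eqxx eq_sym (negbTE ij).
  by case: (s i); rewrite /rsign /= ?mulN1r ?mulNr ?mul1r ?opprK.
lra.
Qed.

Lemma rad_sq N (c : 'I_N -> R) :
  \sum_(s : {ffun 'I_N -> bool}) (\sum_i rsign R (s i) * c i) ^+ 2
  = (2 ^ N)%:R * \sum_i c i ^+ 2.
Proof.
transitivity (\sum_(s : {ffun 'I_N -> bool}) \sum_i \sum_j c i * c j *
   (rsign R (s i) * rsign R (s j))).
  apply: eq_bigr => s _; rewrite expr2 mulr_suml; apply: eq_bigr => i _.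
  rewrite mulr_sumr; apply: eq_bigr => j _; ring.
rewrite exchange_big /= mulr_sumr; apply: eq_bigr => i _.
rewrite exchange_big /= (bigD1 i) //= [X in _ + X]big1 ?addr0.
  rewrite -mulr_sumr (eq_bigr (fun _ => 1)); last by move=> s _; rewrite rsign_sq.
  rewrite sumr_const card_ffun card_ord card_bool -[(1 *+ _)]/((2 ^ N)%:R).
  by rewrite expr2 mulrC.
move=> j ji; rewrite -mulr_sumr sum_sign_cross ?mulr0 //.
by rewrite eq_sym.
Qed.

Lemma cauchy_schwarz n (x v : 'I_n -> R) :
  (\sum_l x l * v l) ^+ 2 <= (\sum_l x l ^+ 2) * (\sum_l v l ^+ 2).
Proof.
have e : forall a b, (x a * v b - x b * v a) ^+ 2 =
   x a ^+ 2 * v b ^+ 2 + x b ^+ 2 * v a ^+ 2 - 2 * (x a * v a * (x b * v b)).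
  by move=> a b; ring.
have hP : \sum_a \sum_b x a ^+ 2 * v b ^+ 2 = (\sum_l x l ^+ 2) * (\sum_l v l ^+ 2).
  by rewrite mulr_suml; apply: eq_bigr => a _; rewrite mulr_sumr.
have hQ : \sum_a \sum_b x b ^+ 2 * v a ^+ 2 = (\sum_l x l ^+ 2) * (\sum_l v l ^+ 2).
  by rewrite exchange_big /= hP.
have hT : \sum_a \sum_b x a * v a * (x b * v b) = (\sum_l x l * v l) ^+ 2.
  by rewrite expr2 mulr_suml; apply: eq_bigr => a _; rewrite mulr_sumr.
have h0 : 0 <= \sum_a \sum_b (x a * v b - x b * v a) ^+ 2.
  by apply: sumr_ge0 => a _; apply: sumr_ge0 => b _; apply: sqr_ge0.
have h1 : \sum_a \sum_b (x a * v b - x b * v a) ^+ 2 =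
   \sum_a \sum_b x a ^+ 2 * v b ^+ 2 + \sum_a \sum_b x b ^+ 2 * v a ^+ 2
   - 2 * \sum_a \sum_b x a * v a * (x b * v b).
  rewrite mulr_sumr -big_split -sumrB /=; apply: eq_bigr => a _.
  rewrite mulr_sumr -big_split -sumrB /=; apply: eq_bigr => b _.
  by rewrite e.
rewrite h1 hP hQ hT in h0; lra.
Qed.

Lemma ln2_ge : 1 / 2 <= ln (2 : R).
Proof.
have h : expR (1 / 2 : R) <= 2.
  have := expR_ge1Dx (- (1 / 2) : R); rewrite expRN => h.
  have hp := expR_gt0 (1 / 2 : R).
  have e : expR (1 / 2 : R) * (expR (1 / 2))^-1 = 1 by rewrite divff // gt_eqF.
  nra.
rewrite -[X in X <= _](expRK (1/2 : R)) ler_ln // posrE ?expR_gt0 //; lra.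
Qed.

Lemma lin_form m n N (W : 'M[R]_(m, n)) (U : 'M[R]_n)
  (X : 'I_N -> 'M[R]_(m, n)) (sg : 'I_N -> R) :
  \sum_i sg i * frob_inner (inner_H W (X i)) U =
  \sum_r \sum_k W r k * \sum_i sg i * \sum_l X i r l * U k l.
Proof.
rewrite /frob_inner /inner_H.
transitivity (\sum_i \sum_r \sum_k \sum_l sg i * (W r k * (X i r l * U k l))).
  apply: eq_bigr => i _.
  under eq_bigr => k _ do under eq_bigr => l _ do rewrite !mxE mulr_suml.
  under eq_bigr => k _ do rewrite exchange_big /=.
  rewrite exchange_big /= mulr_sumr; apply: eq_bigr => r _.
  rewrite mulr_sumr; apply: eq_bigr => k _.
  rewrite mulr_sumr; apply: eq_bigr => l _.
  by rewrite !mxE; ring.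
rewrite exchange_big /=; apply: eq_bigr => r _.
rewrite exchange_big /=; apply: eq_bigr => k _.
rewrite mulr_sumr; apply: eq_bigr => i _.
rewrite !mulr_sumr; apply: eq_bigr => l _; ring.
Qed.

Lemma entry_le_max m n (W : 'M[R]_(m, n)) r k : `|W r k| <= mx_normmax W.
Proof.
rewrite /mx_normmax.
apply: le_trans (le_bigmax _ (fun i => \big[Num.max/0]_(j < n) `|W i j|) r).
exact: (le_bigmax _ (fun j => `|W r j|) k).
Qed.

Lemma normmax0 m n : mx_normmax (0 : 'M[R]_(m, n)) <= 1.
Proof.
rewrite /mx_normmax; apply: bigmax_le => // i _; apply: bigmax_le => // j _.
by rewrite mxE normr0.
Qed.

Lemma frob_unit_le1 n (U : 'M[R]_n) :
  \sum_k \sum_l ((frob_norm U)^-1 *: U) k l ^+ 2 <= 1.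
Proof.
rewrite /frob_norm /frob_inner.
set S := \sum_i \sum_j U i j * U i j.
have S0 : 0 <= S by apply: sumr_ge0 => i _; apply: sumr_ge0 => j _; rewrite -expr2 sqr_ge0.
under eq_bigr => k _ do under eq_bigr => l _ do rewrite mxE exprMn.
under eq_bigr => k _ do rewrite -mulr_sumr.
rewrite -mulr_sumr exprVn sqr_sqrtr //.
have -> : \sum_i \sum_j U i j ^+ 2 = S by apply: eq_bigr => i _; apply: eq_bigr => j _; rewrite expr2.
have [->|Sn0] := eqVneq S 0; first by rewrite mulr0.
by rewrite mulVf.
Qed.

Lemma frob_sq_le m n (X : 'M[R]_(m, n)) (M : R) : mx_norm1 X <= M ->
  \sum_r \sum_l X r l ^+ 2 <= n%:R * M ^+ 2.
Proof.
move=> hM.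
rewrite exchange_big /=.
apply: le_trans (_ : \sum_(l < n) M ^+ 2 <= _); last first.
  by rewrite sumr_const card_ord mulr_natl.
apply: ler_sum => l _.
set cs := \sum_(r < m) `|X r l|.
have cs0 : 0 <= cs by apply: sumr_ge0 => r _.
have csM : cs <= M.
  apply: le_trans hM; exact: (le_bigmax _ (fun j => \sum_(i < m) `|X i j|) l).
apply: le_trans (_ : \sum_r `|X r l| * cs <= _).
  apply: ler_sum => r _.
  have hr : `|X r l| <= cs by rewrite /cs (bigD1 r) //= lerDl sumr_ge0.
  rewrite -real_normK ?num_real // expr2.
  by apply: ler_wpM2l.
rewrite -mulr_suml -/cs expr2.
by apply: ler_pM.
Qed.

Lemma ar1 (a m N n M : R) : m != 0 -> a * (m * n) * (M ^+ 2 * (N / m)) = a * (N * (n * M ^+ 2)).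
Proof. by move=> h; field. Qed.
Lemma ar2 (a m N n M q : R) : a != 0 -> N != 0 ->
  N^-1 * (a^-1 * (a * (m * n) * (M * q))) = n * M * (m * q / N).
Proof. by move=> h1 h2; field; rewrite h1 h2. Qed.
Lemma ar3 (m N q : R) : m != 0 -> N != 0 -> q ^+ 2 = N / m ->
  (m * q / N) ^+ 2 = m / N.
Proof. move=> h1 h2 h3; by rewrite !exprMn h3; field; rewrite h1 h2. Qed.
Lemma amgm (x t : R) : 2 * t * `|x| <= x ^+ 2 + 1 * t ^+ 2.
Proof.
have := sqr_ge0 (`|x| - t); rewrite -[x ^+ 2]real_normK ?num_real //.
move: (`|x|) => y; nra.
Qed.

Lemma mle (m l n : R) : 0 <= m -> 1 / 2 <= l -> 0 <= n -> m <= 2 * (m * l + n).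
Proof. move=> *; nra. Qed.

Lemma mle0 (m l n : R) : 0 <= m -> 1 / 2 <= l -> 0 <= n -> 0 <= 2 * (m * l + n).
Proof. move=> *; nra. Qed.

End Helpers.

Theorem lemma5 (R : realType) (m n N : nat) (hm : (0 < m)%N) (hn : (0 < n)%N)
  (hN : (0 < N)%N)
  (V : 'M[R]_n) (hV0 : V != 0) (hVsym : V^T = V)
  (hV : forall X : 'M[R]_(m, n),
      0 <= frob_inner (inner_H X X) ((frob_norm V)^-1 *: V))
  (Xs : 'I_N -> 'M[R]_(m, n)) :
  rademacher (Hmax_S V Xs) <=
    n%:R * (\big[Num.max/0]_(i < N) mx_norm1 (Xs i)) *
    Num.sqrt (2 * (m%:R * ln 2 + ln n%:R) / N%:R).
Proof.
set V' := (frob_norm V)^-1 *: V.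
set M := \big[Num.max/0]_(i < N) mx_norm1 (Xs i).
pose d i r k := \sum_(l < n) Xs i r l * V' k l.
pose D (s : {ffun 'I_N -> bool}) r k := \sum_(i < N) rsign R (s i) * d i r k.
have hA : forall s : {ffun 'I_N -> bool},
    sup [set \sum_(i < N) rsign R (s i) * a i | a in Hmax_S V Xs]
    <= \sum_(r < m) \sum_(k < n) `|D s r k|.
  move=> s; apply: ge_sup.
    exists (\sum_(i < N) rsign R (s i) *
               frob_inner (inner_H (0 : 'M[R]_(m, n)) (Xs i)) V').
    exists (fun i => frob_inner (inner_H (0 : 'M[R]_(m, n)) (Xs i)) V') => //.
    by exists 0 => //; apply: normmax0.
  move=> y [a [W hW <-] <-].
  rewrite lin_form; apply: ler_sum => r _; apply: ler_sum => k _.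
  apply: le_trans (ler_norm _) _; rewrite normrM.
  have hw : `|W r k| <= 1 := le_trans (@entry_le_max R m n W r k) hW.
  by rewrite -[X in _ <= X]mul1r ler_wpM2r.
have hb : \sum_(s : {ffun 'I_N -> bool}) \sum_(r < m) \sum_(k < n) D s r k ^+ 2
    = (2 ^ N)%:R * \sum_(r < m) \sum_(k < n) \sum_(i < N) d i r k ^+ 2.
  rewrite exchange_big /= mulr_sumr; apply: eq_bigr => r _.
  rewrite exchange_big /= mulr_sumr; apply: eq_bigr => k _.
  exact: (@rad_sq R N (fun i => d i r k)).
have hdi : forall i, \sum_(r < m) \sum_(k < n) d i r k ^+ 2 <= n%:R * M ^+ 2.
  move=> i; apply: le_trans (_ : \sum_(r < m) \sum_(l < n) Xs i r l ^+ 2 <= _); last first.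
    apply: frob_sq_le; exact: (le_bigmax _ (fun i => mx_norm1 (Xs i)) i).
  apply: ler_sum => r _.
  apply: le_trans (_ : \sum_(k < n) (\sum_(l < n) Xs i r l ^+ 2) * (\sum_(l < n) V' k l ^+ 2) <= _).
    by apply: ler_sum => k _; apply: cauchy_schwarz.
  rewrite -mulr_sumr -[X in _ <= X]mulr1; apply: ler_wpM2l.
    by apply: sumr_ge0 => l _; apply: sqr_ge0.
  exact: frob_unit_le1.
have hsumd : \sum_(r < m) \sum_(k < n) \sum_(i < N) d i r k ^+ 2 <= N%:R * (n%:R * M ^+ 2).
  under eq_bigr => r _ do rewrite exchange_big /=.
  rewrite exchange_big /=.
  apply: le_trans (_ : \sum_(i < N) n%:R * M ^+ 2 <= _).
    by apply: ler_sum => i _; apply: hdi.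
  by rewrite sumr_const card_ord (mulr_natl (n%:R * M ^+ 2) N).
pose c : R := (2 ^ N)%:R * (m%:R * n%:R).
have hc : \sum_(s : {ffun 'I_N -> bool}) \sum_(r < m) \sum_(k < n) (1 : R) = c.
  rewrite /c !sumr_const !card_ord card_ffun card_bool card_ord.
  by rewrite -!mulrnA -!natrM [in RHS]mulnC -mulnA mulnCA.
have c0 : 0 < c by rewrite /c !mulr_gt0 // ltr0n ?expn_gt0.
have M0 : 0 <= M by apply: bigmax_ge_id.
pose K : R := M * Num.sqrt (N%:R / m%:R).
have hkey : \sum_(s : {ffun 'I_N -> bool}) \sum_(r < m) \sum_(k < n) `|D s r k| <= c * K.
  apply: (@key_ineq R _ (\sum_(s : {ffun 'I_N -> bool}) \sum_(r < m) \sum_(k < n) D s r k ^+ 2) _ _ c0).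
  - by rewrite /K mulr_ge0 // sqrtr_ge0.
  - rewrite hb.
    have -> : c * K ^+ 2 = (2 ^ N)%:R * (N%:R * (n%:R * M ^+ 2)).
      rewrite /c /K exprMn sqr_sqrtr ?divr_ge0 ?ler0n //.
      by apply: ar1; rewrite pnatr_eq0 -lt0n.
    by apply: ler_wpM2l => //; apply: hsumd.
  - move=> t t0; rewrite -hc.
    rewrite mulr_sumr mulr_suml -big_split /=; apply: ler_sum => s _.
    rewrite mulr_sumr mulr_suml -big_split /=; apply: ler_sum => r _.
    rewrite mulr_sumr mulr_suml -big_split /=; apply: ler_sum => k _.
    exact: amgm.
rewrite /rademacher.
apply: le_trans (_ : N%:R^-1 * ((2 ^ N)%:R^-1 * (c * K)) <= _).
  rewrite ler_wpM2l ?invr_ge0 ?ler0n // ler_wpM2l ?invr_ge0 ?ler0n //.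
  apply: le_trans hkey; apply: ler_sum => s _; exact: hA.
have -> : N%:R^-1 * ((2 ^ N)%:R^-1 * (c * K)) =
    n%:R * M * (m%:R * Num.sqrt (N%:R / m%:R) / N%:R).
  rewrite /c /K; apply: ar2; by rewrite pnatr_eq0 -lt0n ?expn_gt0.
apply: ler_wpM2l; first by rewrite mulr_ge0.
have hNp : (0 : R) < N%:R by rewrite ltr0n.
have hmp : (0 : R) < m%:R by rewrite ltr0n.
have -> : m%:R * Num.sqrt (N%:R / m%:R) / N%:R = Num.sqrt (m%:R / N%:R) :> R.
  rewrite -[LHS]ger0_norm; last by rewrite mulr_ge0 ?invr_ge0 ?mulr_ge0 ?sqrtr_ge0 ?ler0n.
  rewrite -sqrtr_sqr; congr Num.sqrt.
  apply: ar3; [by rewrite pnatr_eq0 -lt0n | by rewrite pnatr_eq0 -lt0n |].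
  by rewrite sqr_sqrtr // divr_ge0 // ler0n.
rewrite ler_sqrt; last first.
  apply: divr_ge0; last exact: ler0n.
  apply: mle0; rewrite ?ler0n ?ln2_ge //; apply: ln_ge0; rewrite ler1n //.
apply: ler_wpM2r; first by rewrite invr_ge0 ler0n.
apply: mle; rewrite ?ler0n ?ln2_ge //; apply: ln_ge0; rewrite ler1n //.
Qed.
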